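(* Let $r(x;m)$, $x\in\mathbb C^*$, $m=0,1,2,\ldots$, be functions satisfying $r(x;0)=1$ identically and $r(qx;m)=\sum_{i=0}^m(-1)^i\binom{m}{i}r(x;m-i)$ for all $x$ and $m$. For $n\ge1$ define $$R(t_1,\ldots,t_n\,|\,t_0)=\sum_{\gamma\in\Gamma_n}(-1)^{n+\ell(\gamma)}\prod_{k=1}^{\ell(\gamma)}r\Big(\prod_{i\in\upsilon(\gamma)_k}t_i\,;\,\#\gamma_k\Big),\qquad \upsilon(\gamma)_k=\{0\}\cup\gamma_1\cup\cdots\cup\gamma_{k-1}.$$ Then $$R(qt_1,t_2,\ldots,t_n\,|\,t_0)=\sum_{\pi\in\Pi^\circ_n}(-1)^{n+\ell(\pi)}R^\pi(t_1,\ldots,t_n\,|\,t_0),$$ where for $\pi=\{\pi_1,\ldots,\pi_\ell\}$, $R^\pi(t\,|\,t_0)=R\big(\prod_{k\in\pi_1}t_k,\ldots,\prod_{k\in\pi_\ell}t_k\,\big|\,t_0\big)$.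
   Context: $q$ is a fixed nonzero complex number and $t_0$ an auxiliary variable. $\Gamma_n$ is the set of compositions of $\{1,\ldots,n\}$: ordered tuples $\gamma=(\gamma_1,\ldots,\gamma_\ell)$ of nonempty, pairwise disjoint subsets with union $\{1,\ldots,n\}$; $\ell(\gamma)=\ell$. $\Pi_n$ is the set of (unordered) set partitions $\pi=\{\pi_1,\ldots,\pi_\ell\}$ of $\{1,\ldots,n\}$ into nonempty blocks, $\ell(\pi)=\ell$. $\Pi^\circ_n\subset\Pi_n$ consists of partitions having at most one block of cardinality $>1$, such a block (if present) containing $1$. ($R$ is symmetric in $t_1,\ldots,t_n$, so $R^\pi$ does not depend on the ordering of blocks.) *)

(* Defs.v *)
From HB Require Import structures.
From mathcomp Require Import all_boot all_order all_algebra.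
From mathcomp Require Export complex.
Set Implicit Arguments. Unset Strict Implicit. Unset Printing Implicit Defensive.
Import Order.TTheory GRing.Theory Num.Theory.
Local Open Scope ring_scope.

(* A composition of {0,..,n-1} (0-indexed version of {1,..,n}) of length l:
   an ordered l-tuple of nonempty, pairwise disjoint subsets covering everything. *)
Definition is_composition (n l : nat) (g : {ffun 'I_l -> {set 'I_n}}) : bool :=
  [&& [forall k, g k != set0],
      [forall j, forall k, (j != k) ==> [disjoint g j & g k]] &
      (\bigcup_(k < l) g k == [set: 'I_n])].

Section R.
Variable (C : fieldType) (r : C -> nat -> C).

(* R(t_1,...,t_n | t_0), with t_{i+1} = t i for i : 'I_n.
   The k-th block (0-indexed) contributes r(t_0 * prod_{i in g_0 u ... u g_{k-1}} t_i ; #g_k). *)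
Definition Rfun (n : nat) (t : 'I_n -> C) (t0 : C) : C :=
  \sum_(l < n.+1) \sum_(g : {ffun 'I_l -> {set 'I_n}} | is_composition g)
     (-1) ^+ (n + l) *
     \prod_(k < l) r (t0 * \prod_(i in \bigcup_(j < l | (j < k)%N) g j) t i) #|g k|.

Definition Rseq (ts : seq C) (t0 : C) : C :=
  Rfun (fun i : 'I_(size ts) => nth 0 ts i) t0.

(* Pi°_n : set partitions with at most one block of size > 1, such a block
   containing the first element (element 1 in the paper's indexing). *)
Definition is_circ_partition (n : nat) (P : {set {set 'I_n}}) : bool :=
  [&& partition P [set: 'I_n],
      #|[set B in P | (1 < #|B|)%N]| <= 1 &
      [forall B in P, (1 < #|B|)%N ==> [exists i in B, val i == 0%N]]]%N.

(* R^pi(t | t0): blocks listed in some (enumeration) order; R is symmetric. *)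
Definition Rpi (n : nat) (P : {set {set 'I_n}}) (t : 'I_n -> C) (t0 : C) : C :=
  Rseq [seq \prod_(k in B) t k | B : {set 'I_n} <- enum P] t0.
End R.

(* Main.v *)
Require Import Defs.
From HB Require Import structures.
From mathcomp Require Import all_boot all_order all_algebra.
From mathcomp Require Import complex.
From mathcomp Require Import ring zify.
Set Implicit Arguments. Unset Strict Implicit. Unset Printing Implicit Defensive.
Import Order.TTheory GRing.Theory Num.Theory.
Local Open Scope ring_scope.

Section Gen.
Variable (C : fieldType) (r : C -> nat -> C).

Definition fcons (X : Type) l (x : X) (h : {ffun 'I_l -> X}) : {ffun 'I_l.+1 -> X} :=
  [ffun i : 'I_l.+1 => if unlift ord0 i is Some j then h j else x].

Lemma big_ffunS (X : finType) l (F : {ffun 'I_l.+1 -> X} -> C) :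
  \sum_g F g = \sum_(x : X) \sum_(h : {ffun 'I_l -> X}) F (fcons x h).
Proof.
rewrite pair_big /=.
rewrite (reindex (fun p : X * {ffun 'I_l -> X} => fcons p.1 p.2)) //=.
exists (fun g : {ffun 'I_l.+1 -> X} => (g ord0, [ffun j => g (lift ord0 j)])).
  move=> [x h] _ /=; congr pair; first by rewrite ffunE unlift_none.
  by apply/ffunP => j; rewrite !ffunE liftK.
move=> g _; apply/ffunP => i; rewrite !ffunE /=.
by case: unliftP => [j ->|->]; rewrite ?ffunE.
Qed.

End Gen.

Section Gen.
Variable (C : fieldType) (r : C -> nat -> C).
Variable (T : finType).

Definition is_comp l (S : {set T}) (g : {ffun 'I_l -> {set T}}) : bool :=
  [&& [forall k, g k != set0],
      [forall j, forall k, (j != k) ==> [disjoint g j & g k]] &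
      (\bigcup_(k < l) g k == S)].

Definition Wt (w : T -> C) (B : {set T}) := \prod_(i in B) w i.

Definition Cf (w : T -> C) l (S : {set T}) (y : C) : C :=
  \sum_(g : {ffun 'I_l -> {set T}} | is_comp S g)
     \prod_(k < l) r (y * \prod_(i in \bigcup_(j < l | (j < k)%N) g j) w i) #|g k|.

Lemma Cf0 w S y : Cf w 0 S y = (S == set0)%:R.
Proof.
rewrite /Cf (eq_bigl (fun _ => S == set0)); last first.
  move=> g; rewrite /is_comp big_ord0.
  have -> : [forall k, g k != set0] by apply/forallP => -[].
  have -> : [forall j, forall k, (j != k) ==> [disjoint g j & g k]] by apply/forallP => -[].
  by rewrite eq_sym.
case: (S == set0); last by rewrite big_pred0.
rewrite (eq_bigr (fun _ => 1)); last by move=> g _; rewrite big_ord0.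
by rewrite sumr_const card_ffun card_ord expn0.
Qed.

Lemma setUDK' (A B : {set T}) : A \subset B -> A :|: (B :\: A) = B.
Proof. by move=> h; apply/setP=> z; rewrite !inE; case: (boolP (z \in A)) => //= zA; rewrite (subsetP h). Qed.

Lemma is_comp_fcons l S x (h : {ffun 'I_l -> {set T}}) :
  is_comp S (fcons x h) = [&& x \subset S, x != set0 & is_comp (S :\: x) h].
Proof.
rewrite /is_comp big_ord_recl.
have E0 : fcons x h ord0 = x by rewrite ffunE unlift_none.
have E1 : forall j, fcons x h (lift ord0 j) = h j by move=> j; rewrite ffunE liftK.
rewrite E0 (eq_bigr (fun j => h j)); last by move=> j _; rewrite E1.
apply/idP/idP.
- case/and3P => /forallP Hne /forallP Hd /eqP HU.
  have Hdx : forall j, [disjoint x & h j].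
    move=> j; have := Hd ord0 => /forallP /(_ (lift ord0 j)).
    by rewrite E0 E1 neq_lift.
  have -> : x \subset S by rewrite -HU subsetUl.
  have -> : x != set0 by have := Hne ord0; rewrite E0.
  rewrite /=.
  apply/and3P; split.
  + by apply/forallP => j; have := Hne (lift ord0 j); rewrite E1.
  + apply/forallP => j; apply/forallP => k; apply/implyP => jk.
    have := Hd (lift ord0 j) => /forallP /(_ (lift ord0 k)).
    by rewrite !E1 (inj_eq (@lift_inj _ ord0)) jk.
  + rewrite -HU setDUl setDv set0U eq_sym; apply/eqP/setDidPl.
    rewrite disjoint_sym; apply/bigcup_disjoint => j _; exact: Hdx.
- case/and3P => xS xne /and3P [/forallP Hne /forallP Hd /eqP HU].
  have Hdx : forall j, [disjoint x & h j].
    move=> j; have : h j \subset S :\: x by rewrite -HU (bigcup_sup j).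
    by rewrite subsetD disjoint_sym => /andP[].
  apply/and3P; split.
  + apply/forallP => i; case: (unliftP ord0 i) => [j ->|->]; rewrite ?E1 ?E0 //.
  + apply/forallP => i; apply/forallP => k; apply/implyP => ik.
    case: (unliftP ord0 i) ik => [j ->|->]; case: (unliftP ord0 k) => [j' ->|->];
      rewrite ?E1 ?E0 ?eqxx //.
    * by rewrite (inj_eq (@lift_inj _ ord0)) => jj; have := Hd j => /forallP /(_ j'); rewrite jj.
    * by rewrite disjoint_sym.
  + by rewrite HU setUDK'.
Qed.

Lemma WtU w (A B : {set T}) : [disjoint A & B] -> Wt w (A :|: B) = Wt w A * Wt w B.
Proof.
move=> dAB; rewrite /Wt (bigID (mem A)) /=; congr (_ * _); apply: eq_bigl => i; rewrite !inE.
  by rewrite andb_idl // => ->.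
case iA: (i \in A) => //=; last by rewrite andbT.
by rewrite (disjointFr dAB iA).
Qed.

Lemma CfS w l S y : Cf w l.+1 S y =
  \sum_(B : {set T} | (B \subset S) && (B != set0)) r y #|B| * Cf w l (S :\: B) (y * Wt w B).
Proof.
rewrite /Cf big_mkcond big_ffunS [RHS]big_mkcond /=.
apply: eq_bigr => x _.
rewrite (eq_bigr (fun h => if (x \subset S) && (x != set0) then
   (if is_comp (S :\: x) h then \prod_(k < l.+1) r (y * \prod_(i in \bigcup_(j < l.+1 | (j < k)%N) fcons x h j) w i) #|fcons x h k| else 0) else 0)); last first.
  by move=> h _; rewrite is_comp_fcons; case: (x \subset S); case: (x != set0).
case: ifP => _; last by rewrite big1.
rewrite mulr_sumr [RHS]big_mkcond /=; apply: eq_bigr => h _.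
case: ifP => hc; last by [].

rewrite big_ord_recl /=.
have E0 : fcons x h ord0 = x by rewrite ffunE unlift_none.
have E1 : forall j, fcons x h (lift ord0 j) = h j by move=> j; rewrite ffunE liftK.
have -> : \bigcup_(j < l.+1 | (j < @ord0 l)%N) fcons x h j = set0 by rewrite big_pred0.
rewrite E0 big_set0 mulr1; congr (_ * _).
apply: eq_bigr => k _; rewrite E1; congr (r _ _).
have -> : \bigcup_(j < l.+1 | (j < lift ord0 k)%N) fcons x h j =
          x :|: \bigcup_(j < l | (j < k)%N) h j.
  rewrite big_mkcond big_ord_recl /= E0; congr (_ :|: _).
  rewrite [RHS]big_mkcond; apply: eq_bigr => j _; rewrite E1 /=.
  by rewrite /bump /= !add1n ltnS.
case/and3P: hc => _ _ /eqP HU.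
have dis : [disjoint x & \bigcup_(j < l | (j < k)%N) h j].
  apply/bigcup_disjoint => j _.
  have : h j \subset S :\: x by rewrite -HU (bigcup_sup j).
  by rewrite subsetD disjoint_sym => /andP[].
by have := WtU w dis; rewrite /Wt => ->; rewrite mulrA.
Qed.

End Gen.

Section Gen.
Variable (C : fieldType) (r : C -> nat -> C).
Variable (T : finType).

Definition Rg (w : T -> C) (S : {set T}) (y : C) : C :=
  \sum_(l < #|S|.+1) (-1) ^+ (#|S| + l) * Cf r w l S y.

Definition rho (B : {set T}) (y : C) : C := (-1) ^+ #|B| * r y #|B|.

Lemma Cf_big (w : T -> C) l (S : {set T}) y : (#|S| < l)%N -> Cf r w l S y = 0.
Proof.
elim: l S y => [//|l IH] S y hl.
rewrite CfS big1 // => B /andP[BS Bn].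
rewrite IH ?mulr0 //.
rewrite cardsDS //; move: (subset_leq_card BS); rewrite -card_gt0 in Bn; lia.
Qed.


Lemma Rg_N (w : T -> C) (S : {set T}) y N : (#|S| < N)%N ->
  Rg w S y = \sum_(l < N) (-1) ^+ (#|S| + l) * Cf r w l S y.
Proof.
move=> hN; rewrite /Rg (big_ord_widen N (fun l => (-1) ^+ (#|S| + l) * Cf r w l S y) hN).
rewrite big_mkcond; apply: eq_bigr => l _; case: ifP => // hl.
by rewrite Cf_big ?mulr0 // ltnNge -ltnS hl.
Qed.

Lemma Rg0 (w : T -> C) y : Rg w set0 y = 1.
Proof. by rewrite /Rg cards0 big_ord1 Cf0 eqxx mulr1. Qed.

Lemma RgS (w : T -> C) (S : {set T}) y : S != set0 ->
  Rg w S y = - \sum_(B : {set T} | (B \subset S) && (B != set0))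
                  rho B y * Rg w (S :\: B) (y * Wt w B).
Proof.
move=> Sn; rewrite {1}/Rg big_ord_recl Cf0 (negbTE Sn) mulr0 add0r.
rewrite (eq_bigr (fun l : 'I_#|S| => \sum_(B : {set T} | (B \subset S) && (B != set0))
   (-1) ^+ (#|S| + l.+1) * (r y #|B| * Cf r w l (S :\: B) (y * Wt w B)))); last first.
  by move=> l _; rewrite CfS mulr_sumr.
rewrite exchange_big /= -sumrN; apply: eq_bigr => B /andP[BS Bn].
have hlt : (#|S :\: B| < #|S|)%N.
  rewrite cardsDS //; move: (subset_leq_card BS); rewrite -card_gt0 in Bn; lia.
rewrite (Rg_N _ _ hlt) mulr_sumr -sumrN; apply: eq_bigr => l _.
have hS : #|S| = (#|B| + #|S :\: B|)%N.
  by rewrite cardsDS // subnKC // subset_leq_card.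
have -> : ((-1) ^+ (#|S| + l.+1) : C) = (-1) ^+ (#|B| + #|S :\: B| + l.+1) by rewrite -hS.
rewrite /rho !exprD exprS; ring.
Qed.

End Gen.

Section Gen.
Variable (C : fieldType) (r : C -> nat -> C).
Variable (T : finType).

Lemma Wt0 (w : T -> C) : Wt w set0 = 1.
Proof. by rewrite /Wt big_set0. Qed.

Lemma Wt_neq0 (w : T -> C) B : (forall i, w i != 0) -> Wt w B != 0.
Proof. by move=> hw; apply/prodf_neq0 => i _. Qed.

Lemma zero_split (k : {set T} -> C -> C) (F : {set T} -> C -> C) w (S : {set T}) y :
  k set0 y = 1 ->
  \sum_(B : {set T} | B \subset S) k B y * F (S :\: B) (y * Wt w B) = 0 ->
  F S y = - \sum_(B : {set T} | (B \subset S) && (B != set0)) k B y * F (S :\: B) (y * Wt w B).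
Proof.
move=> k0; rewrite (bigD1 set0) ?sub0set //= k0 setD0 Wt0 mulr1 mul1r.
by move/eqP; rewrite addr_eq0 => /eqP ->.
Qed.

Lemma Rg_zero (w : T -> C) (S : {set T}) y : r y 0 = 1 -> S != set0 ->
  \sum_(B : {set T} | B \subset S) rho r B y * Rg r w (S :\: B) (y * Wt w B) = 0.
Proof.
move=> hr Sn; rewrite (bigD1 set0) ?sub0set //= /rho cards0 expr0 mul1r hr mul1r.
by rewrite setD0 Wt0 mulr1 (RgS _ _ _ Sn) addNr.
Qed.

Lemma uniq_k (w : T -> C) (k : {set T} -> C -> C) (F1 F2 : {set T} -> C -> C) :
  (forall i, w i != 0) -> (forall y, y != 0 -> k set0 y = 1) ->
  (forall y, y != 0 -> F1 set0 y = F2 set0 y) ->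
  (forall S y, y != 0 -> S != set0 ->
     \sum_(B : {set T} | B \subset S) k B y * F1 (S :\: B) (y * Wt w B) = 0) ->
  (forall S y, y != 0 -> S != set0 ->
     \sum_(B : {set T} | B \subset S) k B y * F2 (S :\: B) (y * Wt w B) = 0) ->
  forall S y, y != 0 -> F1 S y = F2 S y.
Proof.
move=> hw hk h0 z1 z2 S.
move: {2}#|S| (leqnn #|S|) => m; elim: m S => [|m IH] S hS y hy.
  by move: hS; rewrite leqn0 cards_eq0 => /eqP ->; apply: h0.
case: (boolP (S == set0)) => [/eqP -> | Sn]; first exact: h0.
rewrite (zero_split (hk _ hy) (z1 _ _ hy Sn)) (zero_split (hk _ hy) (z2 _ _ hy Sn)).
congr (- _); apply: eq_bigr => B /andP[BS Bn]; congr (_ * _).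
apply: IH; last by rewrite mulf_neq0 // Wt_neq0.
rewrite cardsDS //; move: (subset_leq_card BS); rewrite -card_gt0 in Bn; lia.
Qed.


Lemma sum_subset_card (f : nat -> C) (B : {set T}) :
  \sum_(A : {set T} | A \subset B) f #|A| = \sum_(k < #|B|.+1) 'C(#|B|, k)%:R * f k.
Proof.
rewrite (partition_big (fun A : {set T} => (inord #|A| : 'I_#|B|.+1)) predT) //=.
apply: eq_bigr => k _.
rewrite (eq_bigr (fun _ => f k)); last first.
  move=> A /andP[AB /eqP <-]; rewrite inordK // ltnS subset_leq_card //.
rewrite (eq_bigl (mem [set A : {set T} | A \subset B & #|A| == k])); last first.
  move=> A; rewrite !inE; case AB: (A \subset B) => //=.
  by rewrite -val_eqE /= inordK // ltnS subset_leq_card.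
by rewrite sumr_const cards_draws mulr_natl.
Qed.

Lemma mobius (D : {set T}) : \sum_(A : {set T} | A \subset D) (-1) ^+ #|A| = (D == set0)%:R :> C.
Proof.
rewrite (sum_subset_card (fun k => (-1) ^+ k)).
have := exprD1n (-1 : C) #|D|; rewrite addNr expr0n cards_eq0 => ->.
by apply: eq_bigr => k _; rewrite mulr_natl.
Qed.

Lemma setD_eqE (A B : {set T}) : (B :\: A == B) = [disjoint B & A].
Proof. by apply/eqP/setDidPl. Qed.

Lemma pair_reindex (X : {set T}) (F : {set T} -> {set T} -> C) :
  \sum_(B : {set T} | B \subset X) \sum_(A : {set T} | A \subset X :\: B) F A B =
  \sum_(D : {set T} | D \subset X) \sum_(A : {set T} | A \subset D) F A (D :\: A).
Proof.
rewrite (exchange_big_dep (fun A : {set T} => A \subset X)) /=; last first.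
  by move=> B A _; rewrite subsetD => /andP[].
rewrite [RHS](exchange_big_dep (fun A : {set T} => A \subset X)) /=; last first.
  by move=> D A DX AD; apply: subset_trans AD DX.
apply: eq_bigr => A AX.
rewrite [RHS](reindex_onto (fun B => A :|: B) (fun D => D :\: A)) /=; last first.
  by move=> D /andP[_ AD]; apply: setUDK'.
apply: eq_big => [B|B].
  by rewrite subsetD subUset subsetUl AX setDUl setDv set0U /= andbT setD_eqE disjoint_sym.
rewrite subsetD => /and3P[_ _ dAB].
by rewrite setDUl setDv set0U; move: dAB; rewrite disjoint_sym => /setDidPl ->.
Qed.

End Gen.

Section Gen.
Variable (C : fieldType) (r : C -> nat -> C).
Variable (T : finType).

Lemma sgn2 (a : nat) : (-1) ^+ a * (-1) ^+ a = 1 :> C.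
Proof. by rewrite -expr2 sqrr_sign. Qed.

Lemma rho_q q y (B : {set T}) :
  (forall m, r (q * y) m = \sum_(i < m.+1) (-1) ^+ i * ('C(m, i))%:R * r y (m - i)%N) ->
  rho r B (q * y) = \sum_(A : {set T} | A \subset B) rho r A y.
Proof.
move=> H; rewrite /rho H (sum_subset_card (fun k => (-1) ^+ k * r y k)).
rewrite mulr_sumr (reindex_inj rev_ord_inj) /=; apply: eq_bigr => i _.
have hi : (i <= #|B|)%N by rewrite -ltnS.
rewrite subSS subKn // bin_sub //.
rewrite -{1}(subnK hi) exprD.
have := sgn2 (#|B| - i); move: ((-1) ^+ (#|B| - i)) => s hs.
transitivity (s * s * ((-1) ^+ i * ('C(#|B|, i))%:R * r y i)); first by ring.
by rewrite hs; ring.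
Qed.


Lemma pair_swap (X : {set T}) (F : {set T} -> {set T} -> C) :
  \sum_(B : {set T} | B \subset X) \sum_(A : {set T} | A \subset X :\: B) F A B =
  \sum_(A : {set T} | A \subset X) \sum_(B : {set T} | B \subset X :\: A) F A B.
Proof.
rewrite (exchange_big_dep (fun A : {set T} => A \subset X)) /=; last first.
  by move=> B A _; rewrite subsetD => /andP[].
apply: eq_bigr => A AX; apply: eq_bigl => B.
by rewrite !subsetD AX /= disjoint_sym.
Qed.

Lemma pair_reindex2 (X : {set T}) (G : {set T} -> {set T} -> C) :
  \sum_(D : {set T} | D \subset X) \sum_(A : {set T} | A \subset D) G A D =
  \sum_(A : {set T} | A \subset X) \sum_(B : {set T} | B \subset X :\: A) G A (A :|: B).
Proof.
rewrite -pair_swap pair_reindex; apply: eq_bigr => D _; apply: eq_bigr => A AD.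
by rewrite setUDK'.
Qed.

Lemma mu_sum0 (F : {set T} -> C) (D : {set T}) :
  \sum_(A : {set T} | A \subset D) (-1) ^+ #|A| * F D = (D == set0)%:R * F D.
Proof. by rewrite -mulr_suml mobius. Qed.

End Gen.

Section Gen.
Variable (C : fieldType) (r : C -> nat -> C).
Variable (T : finType).

Lemma sum_delta (X : {set T}) (F : {set T} -> C) :
  \sum_(D : {set T} | D \subset X) (D == set0)%:R * F D = F set0.
Proof.
rewrite (bigD1 set0) ?sub0set //= eqxx mul1r big1 ?addr0 //.
by move=> D /andP[_ /negbTE ->]; rewrite mul0r.
Qed.

Lemma Gsum (w : T -> C) (X : {set T}) z :
  \sum_(E : {set T} | E \subset X) \sum_(A : {set T} | A \subset X :\: E)
     (-1) ^+ #|A| * Rg r w ((X :\: E) :\: A) (z * Wt w E * Wt w A) = Rg r w X z.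
Proof.
rewrite pair_reindex.
rewrite (eq_bigr (fun D : {set T} => \sum_(A : {set T} | A \subset D) (-1) ^+ #|A| * Rg r w (X :\: D) (z * Wt w D))).
  by rewrite (eq_bigr (fun D : {set T} => (D == set0)%:R * Rg r w (X :\: D) (z * Wt w D)))
       ?sum_delta ?setD0 ?Wt0 ?mulr1 // => D _; rewrite -mulr_suml mobius.
move=> D DX; apply: eq_bigr => A AD.
have hU : (D :\: A) :|: A = D by rewrite setUC setUDK'.
have dj : [disjoint D :\: A & A] by rewrite disjoints_subset; apply/subsetP => x; rewrite !inE => /andP[].

by rewrite setDDl hU -mulrA -WtU // hU.
Qed.


Lemma disjD (D A : {set T}) : [disjoint D :\: A & A].
Proof. by rewrite disjoints_subset; apply/subsetP => x; rewrite !inE => /andP[]. Qed.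

Lemma RgQ (w : T -> C) q (hw : forall i, w i != 0) (hq : q != 0)
  (hr0 : forall x, x != 0 -> r x 0 = 1)
  (hrq : forall x m, x != 0 ->
     r (q * x) m = \sum_(i < m.+1) (-1) ^+ i * ('C(m, i))%:R * r x (m - i)%N)
  (S : {set T}) y : y != 0 ->
  Rg r w S (q * y) = \sum_(A : {set T} | A \subset S) (-1) ^+ #|A| * Rg r w (S :\: A) (y * Wt w A).
Proof.
pose G := fun (S : {set T}) y =>
  \sum_(A : {set T} | A \subset S) (-1) ^+ #|A| * Rg r w (S :\: A) (y * Wt w A).
move: S y; apply: (@uniq_k C T w (fun B y => rho r B (q * y)) (fun S y => Rg r w S (q * y)) G hw).
- by move=> y0 hy0; rewrite /rho cards0 expr0 mul1r hr0 // mulf_neq0.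
- move=> y0 hy0; rewrite Rg0 /G (big_pred1 set0); last by move=> A; rewrite subset0.
  by rewrite cards0 expr0 mul1r setD0 Rg0.
- move=> S0 y0 hy0 Sn; rewrite -[RHS](Rg_zero w (hr0 _ (mulf_neq0 hq hy0)) Sn).
  by apply: eq_bigr => B _; rewrite mulrA.
move=> S0 y0 hy0 Sn.
rewrite (eq_bigr (fun B : {set T} => \sum_(A : {set T} | A \subset B) rho r A y0 * G (S0 :\: B) (y0 * Wt w B))); last first.
  by move=> B _; rewrite (rho_q B (fun m => hrq y0 m hy0)) mulr_suml.
rewrite pair_reindex2.
rewrite -[RHS](Rg_zero w (hr0 _ hy0) Sn); apply: eq_bigr => A AS.
rewrite -mulr_sumr; congr (_ * _); rewrite -Gsum; apply: eq_bigr => E ES.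
have dAE : [disjoint A & E] by move: ES; rewrite subsetD disjoint_sym => /andP[].
by rewrite /G WtU // mulrA setDDl.
Qed.

End Gen.

Section Gen.
Variable (C : fieldType) (r : C -> nat -> C).
Variable (T : finType).

Lemma Rg_local (w w' : T -> C) (S : {set T}) y : {in S, w =1 w'} -> Rg r w S y = Rg r w' S y.
Proof.
move=> h; rewrite /Rg; apply: eq_bigr => l _; congr (_ * _); rewrite /Cf.
apply: eq_bigr => g hg; apply: eq_bigr => k _; congr (r (y * _) _).
apply: eq_bigr => i hi; apply: h.
case/and3P: hg => _ _ /eqP <-; case/bigcupP: hi => j _ hj.
by apply/bigcupP; exists j.
Qed.

Variable (a : T).

Definition wq (q : C) (w : T -> C) := fun i => if i == a then q * w a else w i.
Definition wA (w : T -> C) (A : {set T}) := fun i => if i == a then w a * Wt w A else w i.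

Lemma Wt_out (w w' : T -> C) (B : {set T}) : a \notin B -> {in [set~ a], w =1 w'} -> Wt w B = Wt w' B.
Proof.
move=> aB h; apply: eq_bigr => i iB; apply: h; rewrite !inE.
by apply: contraNneq aB => <-.
Qed.

Lemma Wt_in (w w' : T -> C) (B : {set T}) c : a \in B -> {in [set~ a], w =1 w'} -> w' a = c * w a ->
  Wt w' B = c * Wt w B.
Proof.
move=> aB h ha; rewrite /Wt (bigD1 a aB) /= [X in _ = _ * X](bigD1 a aB) /= ha -mulrA; congr (_ * (_ * _)).
by apply: eq_bigr => i /andP[_ ia]; rewrite h // !inE.
Qed.

Lemma wq_out q w : {in [set~ a], w =1 wq q w}.
Proof. by move=> i; rewrite !inE /wq => /negbTE ->. Qed.

Lemma wA_out w A : {in [set~ a], w =1 wA w A}.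
Proof. by move=> i; rewrite !inE /wA => /negbTE ->. Qed.


Lemma main' (w : T -> C) q (hw : forall i, w i != 0) (hq : q != 0)
  (hr0 : forall x, x != 0 -> r x 0 = 1)
  (hrq : forall x m, x != 0 ->
     r (q * x) m = \sum_(i < m.+1) (-1) ^+ i * ('C(m, i))%:R * r x (m - i)%N)
  (S : {set T}) y : y != 0 ->
  Rg r (wq q w) S y =
  (if a \in S then \sum_(A : {set T} | A \subset S :\ a) (-1) ^+ #|A| * Rg r (wA w A) (S :\: A) y
   else Rg r w S y).
Proof.
pose H := fun (S : {set T}) y =>
  (if a \in S then \sum_(A : {set T} | A \subset S :\ a) (-1) ^+ #|A| * Rg r (wA w A) (S :\: A) y
   else Rg r w S y).
move: S y; apply: (@uniq_k C T (wq q w) (fun B y => rho r B y) (fun S y => Rg r (wq q w) S y) H).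
- by move=> i; rewrite /wq; case: ifP => _; [exact: mulf_neq0|exact: hw].
- by move=> y0 hy0; rewrite /rho cards0 expr0 mul1r hr0.
- by move=> y0 hy0; rewrite Rg0 /H inE Rg0.
- by move=> S0 y0 hy0 Sn; apply: Rg_zero => //; apply: hr0.
move=> S0 y0 hy0 Sn; rewrite /H.
case: (boolP (a \in S0)) => aS; last first.
  rewrite -[RHS](Rg_zero w (hr0 _ hy0) Sn); apply: eq_bigr => B BS.
  have aB : a \notin B by apply: contra aS; apply: (subsetP BS).
  by rewrite inE (negbTE aS) andbF (Wt_out aB (wq_out q w)).
have Z : \sum_(A : {set T} | A \subset S0 :\ a) (-1) ^+ #|A| *
   \sum_(B : {set T} | B \subset S0 :\: A) rho r B y0 * Rg r (wA w A) ((S0 :\: A) :\: B) (y0 * Wt (wA w A) B) = 0.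
  apply: big1 => A; rewrite subsetD1 => /andP[AS aA].
  rewrite Rg_zero ?mulr0 //; first exact: hr0.
  by apply/set0Pn; exists a; rewrite inE aA aS.
rewrite -[RHS]Z.
rewrite [RHS](eq_bigr (fun A : {set T} => \sum_(B : {set T} | B \subset S0 :\: A) (-1) ^+ #|A| *
   (rho r B y0 * Rg r (wA w A) ((S0 :\: A) :\: B) (y0 * Wt (wA w A) B)))); last first.
  by move=> A _; rewrite mulr_sumr.
rewrite [RHS](exchange_big_dep (fun B : {set T} => B \subset S0)) /=; last first.
  by move=> A B _; rewrite subsetD => /andP[].
rewrite (bigID (fun B : {set T} => a \in B)) [RHS](bigID (fun B : {set T} => a \in B)) /=.
congr (_ + _).
- apply: eq_bigr => B /andP[BS aB].
  have -> : (a \in S0 :\: B) = false by rewrite inE aB.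
  rewrite (Wt_in (c := q) aB (wq_out q w)); last by rewrite /wq eqxx.
  rewrite mulrCA RgQ //; last by rewrite mulf_neq0 // Wt_neq0.
  rewrite mulr_sumr; apply: eq_big => [A|A].
    rewrite (subsetD1 A S0 a) !subsetD BS /=.
    case dj: [disjoint A & B]; last by rewrite disjoint_sym dj !andbF.
    by rewrite (disjointFl dj aB) disjoint_sym dj !andbT.
  rewrite subsetD => /andP[AS dj].
  rewrite [LHS]mulrCA; congr (_ * (_ * _)).
  rewrite (Wt_in (c := Wt w A) aB (wA_out w A)); last by rewrite /wA eqxx mulrC.
  have -> : y0 * (Wt w A * Wt w B) = y0 * Wt w B * Wt w A by ring.
  rewrite !setDDl (setUC A B); apply: Rg_local => i.
  by rewrite !inE => /andP[/norP[ib _] _]; apply: wA_out; rewrite !inE; apply: contraNneq ib => ->.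
- apply: eq_bigr => B /andP[BS aB].
  have -> : (a \in S0 :\: B) by rewrite inE aB.
  rewrite -(Wt_out aB (wq_out q w)) mulr_sumr; apply: eq_big => [A|A].
    rewrite !subsetD1 !subsetD BS /= disjoint_sym.
    by rewrite -!andbA (andbC [disjoint B & A]).
  move=> _.
  by rewrite [LHS]mulrCA !setDDl (setUC A B) -(Wt_out aB (wA_out w A)).
Qed.

End Gen.

Section Gen.
Variable (C : fieldType) (r : C -> nat -> C).

Lemma Rg_inj (T1 T2 : finType) (f : T1 -> T2) (injf : injective f) (w : T2 -> C)
  (hw : forall i, w i != 0) (hr0 : forall x, x != 0 -> r x 0 = 1) (S : {set T1}) y :
  y != 0 -> Rg r (fun i => w (f i)) S y = Rg r w (f @: S) y.
Proof.
have preK : forall B : {set T1}, f @^-1: (f @: B) = B.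
  by move=> B; apply/setP => x; rewrite inE mem_imset.
have imD : forall A B : {set T1}, f @: (A :\: B) = (f @: A) :\: (f @: B).
  move=> A B; apply/setP => z; rewrite inE.
  case: (pickP (fun x => f x == z)) => [x /eqP <- | none].
    by rewrite !mem_imset // inE.
  have nz : forall X : {set T1}, z \in f @: X = false.
    by move=> X; apply/imsetP => -[x _ e]; have := none x; rewrite e eqxx.
  by rewrite !nz.
move: S y; apply: (@uniq_k C T1 (fun i => w (f i)) (fun B y => rho r B y)
   (fun S y => Rg r (fun i => w (f i)) S y) (fun S y => Rg r w (f @: S) y)) => //.
- by move=> y0 hy0; rewrite /rho cards0 expr0 mul1r hr0.
- by move=> y0 hy0; rewrite imset0 !Rg0.
- by move=> S0 y0 hy0 Sn; apply: Rg_zero => //; apply: hr0.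
move=> S0 y0 hy0 Sn.
have fSn : f @: S0 != set0 by rewrite imset_eq0.
rewrite -[RHS](Rg_zero w (hr0 _ hy0) fSn).
rewrite [RHS](reindex_onto (fun B : {set T1} => f @: B) (fun B' : {set T2} => f @^-1: B')) /=; last first.
  move=> B' B'S; apply/setP => z; apply/imsetP/idP => [[x]|hz]; first by rewrite inE => hx ->.
  by case/imsetP: (subsetP B'S z hz) => x _ ex; exists x => //; rewrite inE -ex.
apply: eq_big => [B|B BS].
  rewrite preK eqxx andbT; apply/idP/idP => [BS|/subsetP h]; first exact: imsetS.
  by apply/subsetP => x xB; have := h (f x); rewrite !mem_imset //; apply.
rewrite /rho card_imset // imD; congr (_ * _ * Rg r w _ (y0 * _)).
by rewrite /Wt big_imset //; move=> x1 x2 _ _; apply: injf.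
Qed.

End Gen.

Section Fin.
Variable (C : fieldType) (r : C -> nat -> C).

Lemma Rfun_Rg n (t : 'I_n -> C) t0 : Rfun r t t0 = Rg r t [set: 'I_n] t0.
Proof.
rewrite /Rfun /Rg cardsT card_ord; apply: eq_bigr => l _.
by rewrite /Cf mulr_sumr.
Qed.

Lemma Rpi_Rg n (P : {set {set 'I_n}}) (t : 'I_n -> C) t0 :
  (forall i, t i != 0) -> t0 != 0 -> (forall x, x != 0 -> r x 0 = 1) ->
  Rpi r P t t0 = Rg r (fun B : {set 'I_n} => \prod_(k in B) t k) P t0.
Proof.
move=> ht ht0 hr0.
rewrite /Rpi /Rseq Rfun_Rg.
set F := (fun B : {set 'I_n} => \prod_(k in B) t k).
set s := [seq F B | B <- enum P].
have hs : forall i : 'I_(size s), (i < size (enum P))%N by move=> i; rewrite -(size_map F) ltn_ord.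
rewrite (@Rg_local C r _ _ (fun i : 'I_(size s) => F (nth set0 (enum P) i))); last first.
  by move=> i _; rewrite /s (nth_map set0) ?hs.
have injf : injective (fun i : 'I_(size s) => nth set0 (enum P) i).
  move=> i j /eqP; rewrite nth_uniq ?hs ?enum_uniq // => /eqP; apply: val_inj.
rewrite (@Rg_inj C r _ _ _ injf F) //; last first.
  by move=> B; apply/prodf_neq0 => i _.
congr (Rg r F _ t0); apply/setP => B; apply/imsetP/idP => [[i _ ->]|hB].
  by rewrite -mem_enum mem_nth ?hs.
have hi : (index B (enum P) < size s)%N by rewrite size_map index_mem mem_enum.
by exists (Ordinal hi); rewrite ?inE //= nth_index ?mem_enum.
Qed.

End Fin.

Local Close Scope ring_scope.

Section Part.
Variables (n : nat) (a : 'I_n).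
Hypothesis ha : val a = 0%N.

Lemma val0E (i : 'I_n) : (val i == 0%N) = (i == a).
Proof. by rewrite -ha val_eqE. Qed.

Definition gA (A : {set 'I_n}) (x : 'I_n) : {set 'I_n} := if x == a then a |: A else [set x].
Definition PA (A : {set 'I_n}) := gA A @: ~: A.

Lemma gA_self (A : {set 'I_n}) x : x \in gA A x.
Proof. by rewrite /gA; case: eqP => [->|_]; rewrite !inE eqxx. Qed.

Lemma gA_inj (A : {set 'I_n}) : injective (gA A).
Proof.
move=> x y; rewrite /gA; case: eqP => [->|xa]; case: eqP => [->|ya] //.
- by move=> E; have := setU11 a A; rewrite E inE => /eqP ay; case: ya; rewrite ay.
- by move=> E; have := setU11 a A; rewrite -E inE => /eqP ax; case: xa; rewrite ax.
- exact: set1_inj.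
Qed.

Lemma PA_partition (A : {set 'I_n}) : a \notin A -> partition (PA A) [set: 'I_n].
Proof.
move=> aA; apply/and3P; split.
- rewrite cover_imset; apply/eqP/setP => z; rewrite inE; apply/bigcupP.
  case: (boolP (z \in A)) => zA.
    by exists a; rewrite /gA ?eqxx !inE ?zA ?orbT.
  by exists z; rewrite ?inE ?zA ?gA_self.
- apply/trivIsetP => B1 B2 /imsetP[x xA ->] /imsetP[y yA ->] neq.
  have xy : x != y by apply: contraNneq neq => ->.
  rewrite !inE in xA yA.
  rewrite /gA; case: eqP => [xa|xa]; case: eqP => [ya|ya].
  + by case/eqP: xy; rewrite xa ya.
  + by rewrite disjoint_sym disjoints1 !inE (negbTE yA) orbF; apply/eqP.
  + by rewrite disjoints1 !inE (negbTE xA) orbF; apply/eqP.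
  + by rewrite disjoints1 inE.
- apply/imsetP => -[x _ e]; have := gA_self A x; by rewrite -e inE.
Qed.

Lemma PA_circ (A : {set 'I_n}) : a \notin A -> is_circ_partition (PA A).
Proof.
move=> aA; apply/and3P; split; first exact: PA_partition.
- apply: (@leq_trans #|[set a |: A]|); last by rewrite cards1.
  apply: subset_leq_card; apply/subsetP => B; rewrite !inE => /andP[/imsetP[x _ ->] hB].
  by move: hB; rewrite /gA; case: eqP => // _; rewrite cards1.
- apply/forall_inP => B /imsetP[x _ eB]; rewrite eB; apply/implyP; rewrite /gA; case: (eqVneq x a) => [_ _|xa].
    by apply/exists_inP; exists a; rewrite ?ha // !inE eqxx.
  by rewrite cards1.
Qed.

Lemma PA_block (A : {set 'I_n}) : a \notin A -> pblock (PA A) a :\ a = A.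
Proof.
move=> aA; case/and3P: (PA_partition aA) => _ tI _.
rewrite (def_pblock tI (imset_f (gA A) (_ : a \in ~: A))) ?gA_self ?inE //.
by rewrite /gA eqxx setU1K.
Qed.

Lemma PA_circK (P : {set {set 'I_n}}) : is_circ_partition P -> PA (pblock P a :\ a) = P.
Proof.
case/and3P => /and3P[/eqP cov tI nz] _ hbig.
have aC : a \in cover P by rewrite cov inE.
set B0 := pblock P a.
have B0P : B0 \in P by apply: pblock_mem.
have aB0 : a \in B0 by rewrite mem_pblock.
have sing : forall B, B \in P -> a \notin B -> exists x, B = [set x].
  move=> B BP aB; apply/cards1P; rewrite eqn_leq card_gt0.
  have -> : B != set0 by apply: contraNneq nz => <-.
  rewrite andbT leqNgt; apply/negP => hB.
  have := forall_inP hbig B BP; rewrite hB /= => /exists_inP[i iB].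
  by rewrite val0E => /eqP ia; move: aB; rewrite -ia iB.
apply/setP => B; apply/imsetP/idP => [[x xA ->]|hB].
  rewrite /gA; case: eqP => [_|xa]; first by rewrite setD1K.
  have xC : x \in cover P by rewrite cov inE.
  have BxP := pblock_mem xC.
  have xBx : x \in pblock P x by rewrite mem_pblock.
  have aBx : a \notin pblock P x.
    apply/negP => aBx; move: xA; rewrite !inE negb_and negbK; apply/negP; rewrite negb_or.
    apply/andP; split; first by apply/eqP.
    by rewrite negbK /B0 (def_pblock tI BxP aBx).
  case: (sing _ BxP aBx) => y ey; move: xBx BxP; rewrite ey inE => /eqP ->.
  by [].
case: (boolP (a \in B)) => aB.
  exists a; first by rewrite !inE eqxx.
  by rewrite /gA eqxx setD1K // /B0 (def_pblock tI hB aB).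
case: (sing _ hB aB) => x ex; exists x; last first.
  by rewrite /gA; case: eqP => [xa|//]; move: aB; rewrite ex xa inE eqxx.
rewrite !inE negb_and negbK; apply/orP; right; apply/negP => xB0.
have : pblock P x = B0 by apply: def_pblock.
have : pblock P x = B by apply: def_pblock => //; rewrite ex inE.
by move=> -> eB; move: aB; rewrite eB aB0.
Qed.

End Part.

Local Open Scope ring_scope.

Theorem theorem10p1 (R : rcfType) (q : R[i]) (r : R[i] -> nat -> R[i])
  (hq : q != 0)
  (hr0 : forall x : R[i], x != 0 -> r x 0%N = 1)
  (hrq : forall (x : R[i]) (m : nat), x != 0 ->
     r (q * x) m = \sum_(i < m.+1) (-1) ^+ i * ('C(m, i))%:R * r x (m - i)%N)
  (n : nat) (hn : (0 < n)%N) (t : 'I_n -> R[i]) (t0 : R[i])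
  (ht : forall i, t i != 0) (ht0 : t0 != 0) :
  Rfun r (fun i : 'I_n => if val i == 0%N then q * t i else t i) t0 =
  \sum_(P : {set {set 'I_n}} | is_circ_partition P)
     (-1) ^+ (n + #|P|) * Rpi r P t t0.
Proof.
pose a := Ordinal hn.
have ha : val a = 0%N by [].
rewrite Rfun_Rg (@Rg_local _ r _ _ (wq a q t)); last first.
  by move=> i _; rewrite /wq (val0E ha); case: eqP => [->|].
rewrite (main' a ht hq hr0 hrq) ?inE //.
rewrite [RHS](reindex_onto (PA a) (fun P => pblock P a :\ a)) /=; last first.
  by move=> P hP; apply: PA_circK.
apply: eq_big => [A|A].
  rewrite subsetD1 subsetT /=; apply/idP/andP => [aA|[_ /eqP <-]]; last by rewrite setD11.
  by split; [exact: PA_circ | rewrite PA_block].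
rewrite subsetD1 subsetT /= => aA.
rewrite Rpi_Rg // /PA -(Rg_inj (@gA_inj n a A)) //; last first.
  by move=> B; apply/prodf_neq0 => i _.
rewrite card_imset; last exact: gA_inj.
have hA : (#|A| <= n)%N by rewrite -[X in (_ <= X)%N]card_ord max_card.
have hC : (#|A| + #|~: A| = n)%N by rewrite cardsC card_ord.
have -> : #|~: A| = (n - #|A|)%N by lia.
have -> : (n + (n - #|A|))%N = (#|A| + (n - #|A|) * 2)%N by lia.
rewrite exprD exprM sqrr_sign mulr1 setTD; congr (_ * _).
apply: Rg_local => x _; rewrite /gA /wA; case: (eqVneq x a) => [_|_].
  by rewrite big_setU1.
by rewrite big_set1.
Qed.
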